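(* In the setting of the context, for every $N$-tuple of integers $\mathbf{x}=(x_1,\dots,x_N)$ with $0\le x_p\le \ell_p$, define \[ V(\mathbf{x})=\sum_{\mathbf{n}=\mathbf{x}}^{\boldsymbol{\ell}}\mathscr{C}_{\mathbf{n},\mathbf{x}}V^{\mathbf{n}},\qquad \mathscr{C}_{\mathbf{n},\mathbf{x}}=\frac{(-1)^{|\mathbf{n}|-|\mathbf{x}|}}{(2|\mathbf{x}|+\omega+1)_{|\mathbf{n}|-|\mathbf{x}|}}\prod_{p=1}^N\binom{n_p}{x_p}\big(|\mathbf{n}|_1^{p-1}+|\mathbf{x}|_1^{p}+|\boldsymbol{\ell}|_p^N+a_p+\omega+1\big)_{n_p-x_p}, \] where $\sum_{\mathbf{n}=\mathbf{x}}^{\boldsymbol{\ell}}$ denotes the sum over all $\mathbf{n}$ with $x_p\le n_p\le\ell_p$ for every $p$. Then $A\,V(\mathbf{x})=\theta_{|\mathbf{x}|}V(\mathbf{x})$.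
   Context: Notation: for $N$-tuples $\mathbf{n}=(n_1,\dots,n_N)$ of integers, $|\mathbf{n}|_j^k=\sum_{p=j}^k n_p$ (equal to $0$ if $j>k$), $|\mathbf{n}|=|\mathbf{n}|_1^N$, $\mathbf{e}_p$ is the $p$-th unit $N$-tuple, and tuples are added componentwise. $(x)_k=x(x+1)\cdots(x+k-1)$, $(x)_0=1$. Setting: $N\ge1$, $\boldsymbol{\ell}=(\ell_1,\dots,\ell_N)$ nonnegative integers, $\mathcal{V}=\mathbb{C}^{\ell_1+1}\otimes\cdots\otimes\mathbb{C}^{\ell_N+1}$ with basis $V^{\mathbf{n}}$, $0\le n_p\le\ell_p$; $V^{\mathbf{n}}=0$ if some $n_p<0$ or $n_p>\ell_p$. Fix scalars $\theta_0,\theta_0^\star,h,h^\star,\omega,\omega^\star,a_1,\dots,a_N\in\mathbb{C}$; $\theta_i=\theta_0+hi(i+\omega)$, $\theta^\star_i=\theta^\star_0+h^\star i(i+\omega^\star)$. For $p=1,\dots,N$: $\xi_{\mathbf{n},p}=h(|\mathbf{n}|_1^{p-1}+|\mathbf{n}|_1^p+|\boldsymbol{\ell}|_p^N+a_p+\omega)n_p$, $\xi^\star_{\mathbf{n},p}=h^\star(|\mathbf{n}|_1^{p-1}+|\mathbf{n}|_1^p+|\boldsymbol{\ell}|_{p+1}^N-a_p+\omega^\star)(n_p-\ell_p)$. The operators are $A V^{\mathbf{n}}=\theta_{|\mathbf{n}|}V^{\mathbf{n}}+\sum_{p=1}^N\xi_{\mathbf{n}+\mathbf{e}_p,p}V^{\mathbf{n}+\mathbf{e}_p}$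 and $A^\star V^{\mathbf{n}}=\theta^\star_{|\mathbf{n}|}V^{\mathbf{n}}+\sum_{p=1}^N\xi^\star_{\mathbf{n}-\mathbf{e}_p,p}V^{\mathbf{n}-\mathbf{e}_p}$. Standing constraints: $h,h^\star\neq0$; $\omega,\omega^\star\notin\{-2|\boldsymbol{\ell}|+1,\dots,-1\}$; for each $i$, none of $a_i,\ a_i+\omega-\omega^\star,\ a_i-|\boldsymbol{\ell}|-\omega^\star,\ a_i+|\boldsymbol{\ell}|+\omega$ lies in $\{-\ell_i,\dots,-1\}$; and with $S^\pm(\ell,a)=\{\pm(a+k+\tfrac12(\omega-\omega^\star)):k=1,\dots,\ell\}$, for all $i,j$ and signs $\epsilon_i,\epsilon_j$, $S^{\epsilon_i}(\ell_i,a_i)$ and $S^{\epsilon_j}(\ell_j,a_j)$ are in general position (one contains the other or their union is not a string). *)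

(* Defs.v *)
From HB Require Import structures.
From mathcomp Require Import all_boot all_order all_algebra.
Set Implicit Arguments. Unset Strict Implicit. Unset Printing Implicit Defensive.
Import Order.TTheory GRing.Theory Num.Theory.
Local Open Scope ring_scope.

Section Defs.
Variable C : numClosedFieldType.
Variable N : nat.
Variable ell : 'I_N -> nat.

(* Index tuples n with 0 <= n_p are stored as finite functions into 'I_bnd;
   the valid ones (the basis indices of V) are those with n_p <= ell_p. *)
Definition bnd : nat := (\max_(p < N) ell p).+1.
Local Notation Idx := {ffun 'I_N -> 'I_bnd}.

Definition valid (m : Idx) : bool := [forall p, (m p <= ell p)%N].

(* integer N-tuples; coordinate p : 'I_N stands for the paper's index p+1 *)
Definition tup (m : Idx) : 'I_N -> int := fun p => (m p : nat)%:Z.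
Definition ellZ : 'I_N -> int := fun p => (ell p)%:Z.
Definition unitT (p : 'I_N) : 'I_N -> int := fun i => (i == p)%:Z.
Definition addT (n m : 'I_N -> int) : 'I_N -> int := fun i => n i + m i.

(* |n|_j^k = sum_{p=j}^k n_p, 1-based (0 if j > k) *)
Definition psum (n : 'I_N -> int) (j k : nat) : int :=
  \sum_(i < N | (j <= i.+1 <= k)%N) n i.
Definition tabs (n : 'I_N -> int) : int := psum n 1 N.

(* vectors of V = C^{l_1+1} (x) ... (x) C^{l_N+1}: coordinates on the valid
   indices (coordinates at invalid indices are always 0 for basis vectors). *)
Local Notation vect := {ffun Idx -> C^o}.

(* basis vector V^n; it is 0 when n is out of range *)
Definition bvec (n : 'I_N -> int) : vect :=
  [ffun m => if valid m && [forall p, tup m p == n p] then 1 else 0].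

Variables (theta0 h omega : C) (a : 'I_N -> C).

Definition theta (i : int) : C := theta0 + h * i%:~R * (i%:~R + omega).

(* xi_{n,p} for paper index p+1 *)
Definition xi (n : 'I_N -> int) (p : 'I_N) : C :=
  h * ((psum n 1 p)%:~R + (psum n 1 p.+1)%:~R + (psum ellZ p.+1 N)%:~R
       + a p + omega) * (n p)%:~R.

Definition Abasis (n : 'I_N -> int) : vect :=
  theta (tabs n) *: bvec n
  + \sum_(p < N) xi (addT n (unitT p)) p *: bvec (addT n (unitT p)).

Definition Aop (v : vect) : vect :=
  \sum_(m : Idx | valid m) v m *: Abasis (tup m).

Definition poch (x : C) (k : nat) : C := \prod_(i < k) (x + i%:R).

Definition nsum (m : Idx) : nat := \sum_(p < N) (m p : nat).

Definition Ccoef (n x : Idx) : C :=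
  (-1) ^+ (nsum n - nsum x)%N / poch ((2 * nsum x)%:R + omega + 1) (nsum n - nsum x)
  * \prod_(p < N) ('C(n p, x p)%:R
      * poch ((psum (tup n) 1 p)%:~R + (psum (tup x) 1 p.+1)%:~R
              + (psum ellZ p.+1 N)%:~R + a p + omega + 1) (n p - x p)).

Definition Vx (x : Idx) : vect :=
  \sum_(n : Idx | valid n && [forall p, (x p <= n p)%N]) Ccoef n x *: bvec (tup n).

End Defs.

Definition is_string (C : numClosedFieldType) (s : seq C) : Prop :=
  exists (c : C) (m : nat),
    forall z, (z \in s) = (z \in [seq c + j%:R | j <- iota 0 m.+1]).

Definition gen_pos (C : numClosedFieldType) (s1 s2 : seq C) : Prop :=
  {subset s1 <= s2} \/ {subset s2 <= s1} \/ ~ is_string (s1 ++ s2).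

Definition Sset (C : numClosedFieldType) (omega omegas : C)
    (eps : bool) (l : nat) (a : C) : seq C :=
  [seq (if eps then 1 else -1) * (a + k%:R + (omega - omegas) / 2%:R)
  | k <- iota 1 l].

(* Main.v *)
Require Import Defs.
From HB Require Import structures.
From mathcomp Require Import all_boot all_order all_algebra.
From mathcomp Require Import ring zify.
Set Implicit Arguments. Unset Strict Implicit. Unset Printing Implicit Defensive.
Import Order.TTheory GRing.Theory Num.Theory.
Local Open Scope ring_scope.


Section Alg.
Variable C : numClosedFieldType.

Lemma pochS (x : C) k : poch x k.+1 = poch x k * (x + k%:R).
Proof. by rewrite /poch big_ord_recr. Qed.

Lemma pochSl (x : C) k : poch x k.+1 = x * poch (x+1) k.
Proof.
rewrite /poch big_ord_recl addr0; congr (_ * _); apply: eq_bigr => i _.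
by rewrite lift0 /= -natr1; ring.
Qed.

Lemma poch0 (x : C) : poch x 0 = 1.
Proof. by rewrite /poch big_ord0. Qed.

Lemma poch_diffS (G : C) j :
  j.+1%:R * poch (G+1) j = poch (G+1) j.+1 - poch G j.+1.
Proof. rewrite pochS pochSl -natr1; ring. Qed.

Lemma poch_diffD (G : C) k :
  (G + k%:R) * (poch (G+1) k - poch G k) = k%:R * poch (G+1) k.
Proof.
case: k => [|j]; first by rewrite !poch0; ring.
rewrite -poch_diffS pochS -natr1; ring.
Qed.

Lemma telescope (Z s : nat -> C) n : s 0%N = 0 ->
  \sum_(p < n) ((s p.+1 - s p) * Z p.+1 + s p * (Z p.+1 - Z p)) = s n * Z n.
Proof.
move=> s0; elim: n => [|n IH]; first by rewrite big_ord0 s0 mul0r.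
rewrite big_ord_recr /= IH; ring.
Qed.
End Alg.


Section Main.
Variable C : numClosedFieldType.
Variable N : nat.
Variable ell : 'I_N -> nat.
Local Notation Idx := {ffun 'I_N -> 'I_(bnd ell)}.

Definition Sm (n : Idx) (q : nat) : C := \sum_(i < N | (i < q)%N) (n i)%:R.

Lemma psum_tup (n : Idx) q : (psum (tup n) 1 q)%:~R = Sm n q.
Proof. by rewrite /psum rmorph_sum /Sm; apply: eq_big => [i|i _]. Qed.

Lemma SmS (n : Idx) (p : 'I_N) : Sm n p.+1 = Sm n p + (n p)%:R.
Proof.
rewrite /Sm (bigD1 p) //= addrC; congr (_ + _); apply: eq_bigl => i.
by rewrite ltnS -val_eqE /=; case: ltngtP.
Qed.

Lemma Sm0 (n : Idx) : Sm n 0 = 0.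
Proof. by rewrite /Sm big_pred0. Qed.

Lemma SmN (n : Idx) : Sm n N = (nsum n)%:R.
Proof. by rewrite /Sm /nsum natr_sum; apply: eq_bigl => i; rewrite ltn_ord. Qed.

Lemma tabsE (n : Idx) : (tabs (tup n))%:~R = (nsum n)%:R :> C.
Proof. by rewrite /tabs psum_tup SmN. Qed.

Lemma tupE (m n : Idx) : [forall p, tup m p == tup n p] = (m == n).
Proof.
apply/forallP/eqP => [H|-> //]; apply/ffunP => p; apply/val_inj.
by have /eqP [] := H p.
Qed.

Lemma bvec_tup (n m : Idx) : valid n -> bvec C ell (tup n) m = (m == n)%:R.
Proof.
move=> vn; rewrite /bvec ffunE tupE; case: eqP => [->|_]; last by rewrite andbF.
by rewrite vn.
Qed.

Definition dec (m : Idx) (p : 'I_N) : Idx :=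
  [ffun i => if i == p then Ordinal (leq_ltn_trans (leq_pred (m i)) (ltn_ord (m i))) else m i].

Lemma dec_val m p i : (dec m p i : nat) = if i == p then (m i).-1 else m i.
Proof. by rewrite ffunE; case: eqP. Qed.

Lemma cond_dec (m n : Idx) p : (0 < m p)%N ->
  [forall i, tup m i == addT (tup n) (unitT p) i] = (n == dec m p).
Proof.
move=> mp; apply/forallP/eqP => [H|-> i].
  apply/ffunP => i; apply/val_inj => /=; rewrite dec_val.
  have := eqP (H i); rewrite /tup /addT /unitT -PoszD => -[].
  by case: eqP => [->|_]; lia.
rewrite /tup /addT /unitT -PoszD dec_val; apply/eqP; congr Posz.
by case: eqP => [->|_]; lia.
Qed.

Lemma cond_dec0 (m n : Idx) p : (m p : nat) = 0%N ->
  [forall i, tup m i == addT (tup n) (unitT p) i] = false.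
Proof.
move=> mp; apply/negbTE/negP => /forallP /(_ p) /eqP.
by rewrite /tup /addT /unitT -PoszD eqxx mp => -[]; lia.
Qed.

Lemma valid_dec (m : Idx) p : valid m -> valid (dec m p).
Proof.
move=> /forallP vm; apply/forallP => i /=. rewrite dec_val.
by case: eqP => _; have := vm i; lia.
Qed.

Lemma nsum_dec (m : Idx) p : (0 < m p)%N -> (nsum (dec m p)).+1 = nsum m.
Proof.
move=> mp; rewrite /nsum (bigD1 p) //= [in RHS](bigD1 p) //= dec_val eqxx.
rewrite -addSn prednK //; congr (_ + _)%N; apply: eq_bigr => i /negbTE ip.
by rewrite dec_val ip.
Qed.

Lemma le_dec (x m : Idx) p : (0 < m p)%N -> [forall i, x i <= m i]%N ->
  [forall i, x i <= dec m p i]%N = (x p < m p)%N.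
Proof.
move=> mp /forallP xm; apply/forallP/idP => [/(_ p)|lt i]; rewrite ?dec_val ?eqxx.
  by have := xm p; lia.
by case: eqP => [->|_]; have := xm i; lia.
Qed.

Lemma Sm_dec (m : Idx) p q : (0 < m p)%N ->
  Sm (dec m p) q = Sm m q - (p < q)%N%:R.
Proof.
move=> mp; rewrite /Sm.
have -> : \sum_(i < N | (i < q)%N) ((dec m p i : nat)%:R : C)
   = \sum_(i < N | (i < q)%N) ((m i)%:R - (i == p)%:R).
  apply: eq_bigr => i _; rewrite dec_val; case: eqP => [->|_]; last by rewrite subr0.
  by rewrite -natrB //; congr _%:R; lia.
rewrite sumrB; congr (_ - _); case: (ltnP p q) => pq.
  rewrite (bigD1 p) //= eqxx big1 ?addr0 // => i /andP[_ /negbTE ->] //.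
by rewrite big1 // => i iq; case: eqP => [ip|//]; move: iq; rewrite ip; lia.
Qed.


Variables (theta0 h omega : C) (a : 'I_N -> C) (x m : Idx).

Definition Lq (q : 'I_N) : C := (psum (ellZ ell) q.+1 N)%:~R.
Definition G (q : 'I_N) : C := Sm m q + Sm x q.+1 + Lq q + a q + omega.
Definition kk (q : 'I_N) : nat := (m q - x q)%N.
Definition Zf (j : nat) (q : 'I_N) : C :=
  'C(m q, x q)%:R * (if (q < j)%N then poch (G q + 1) (kk q) else poch (G q) (kk q)).
Definition Z (j : nat) : C := \prod_(q < N) Zf j q.
Definition Rr (p : 'I_N) : C := \prod_(q < N | q != p) Zf p q.
Definition ss (j : nat) : C := Sm m j - Sm x j.

Lemma ltnS_neq (q p : 'I_N) : q != p -> (q < p.+1)%N = (q < p)%N.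
Proof. by rewrite -val_eqE /= ltnS leq_eqVlt => /negbTE ->. Qed.

Lemma Z_split (p : 'I_N) : Z p.+1 = Rr p * ('C(m p, x p)%:R * poch (G p + 1) (kk p))
  /\ Z p = Rr p * ('C(m p, x p)%:R * poch (G p) (kk p)).
Proof.
rewrite /Z (bigD1 p) //= [X in _ /\ X = _](bigD1 p) //= /Zf ltnSn ltnn.
split; rewrite mulrC //; congr (_ * _); apply: eq_bigr => q qp.
by rewrite /Zf ltnS_neq.
Qed.

Lemma Ccoef_m : Ccoef omega a m x = (-1) ^+ (nsum m - nsum x)%N
   / poch ((2 * nsum x)%:R + omega + 1) (nsum m - nsum x) * Z N.
Proof.
rewrite /Ccoef /Z; congr (_ * _); apply: eq_bigr => q _.
by rewrite !psum_tup /Zf ltn_ord.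
Qed.

Lemma Ccoef_dec (p : 'I_N) : (x p < m p)%N ->
  Ccoef omega a (dec m p) x * (m p)%:R = (-1) ^+ (nsum (dec m p) - nsum x)%N
   / poch ((2 * nsum x)%:R + omega + 1) (nsum (dec m p) - nsum x) * (Z p.+1 - Z p).
Proof.
move=> xp; have mp : (0 < m p)%N by lia.
rewrite /Ccoef; set Q := (_ / _); rewrite -mulrA; congr (Q * _).
have [-> ->] := Z_split p.
rewrite (bigD1 p) //=.
have -> : \prod_(q < N | q != p) ('C(dec m p q, x q)%:R *
   poch ((psum (tup (dec m p)) 1 q)%:~R + (psum (tup x) 1 q.+1)%:~R +
         (psum (ellZ ell) q.+1 N)%:~R + a q + omega + 1) (dec m p q - x q)) = Rr p.
  apply: eq_bigr => q qp; rewrite !psum_tup Sm_dec // dec_val (negbTE qp) /Zf.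
  congr (_ * _); case: (ltngtP q p) => [qp'|pq|/val_inj qp']; last by rewrite qp' eqxx in qp.
    by rewrite subr0.
  by rewrite /kk /G /Lq /=; congr poch; ring.
rewrite !psum_tup Sm_dec // ltnn subr0 dec_val eqxx.
have kkE : kk p = ((m p).-1 - x p).+1 by rewrite /kk; lia.
have binE : (m p)%:R * 'C((m p).-1, x p)%:R = ((m p).-1 - x p).+1%:R * 'C(m p, x p)%:R :> C.
  by rewrite -!natrM mul_bin_down; congr (_ * _)%:R; lia.
rewrite kkE -mulrBr -mulrBr -poch_diffS.
set j := ((m p).-1 - x p)%N.
set P := poch _ j.
have -> : P = poch (G p + 1) j by [].
transitivity (Rr p * poch (G p + 1) j * ((m p)%:R * 'C((m p).-1, x p)%:R)); first by ring.
by rewrite binE; ring.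
Qed.

Lemma xi_m (p : 'I_N) : (x p <= m p)%N ->
  xi ell h omega a (tup m) p = h * (G p + (kk p)%:R + ss p) * (m p)%:R.
Proof.
move=> xp; rewrite /xi !psum_tup /G /ss /kk /Lq !SmS natrB //.
have -> : ((tup m p)%:~R : C) = (m p)%:R by [].
ring.
Qed.

Lemma Ediff (p : 'I_N) : (x p <= m p)%N ->
  (G p + (kk p)%:R + ss p) * (Z p.+1 - Z p)
  = (ss p.+1 - ss p) * Z p.+1 + ss p * (Z p.+1 - Z p).
Proof.
move=> xp.
have -> : ss p.+1 - ss p = (kk p)%:R by rewrite /ss /kk !SmS natrB //; ring.
have [-> ->] := Z_split p.
have := poch_diffD (G p) (kk p).
move: (poch (G p + 1) (kk p)) (poch (G p) (kk p)) => P1 P0 H.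
transitivity (Rr p * 'C(m p, x p)%:R * ((G p + (kk p)%:R) * (P1 - P0)) + ss p * (Rr p * ('C(m p, x p)%:R * P1) - Rr p * ('C(m p, x p)%:R * P0))); first by ring.
rewrite H; ring.
Qed.


Lemma Vx_coord (y n : Idx) : Vx omega a y n =
  if valid n && [forall p, y p <= n p]%N then Ccoef omega a n y else 0.
Proof.
rewrite /Vx sum_ffunE; case: ifP => Pn.
  rewrite (bigD1 n) //= ffunE bvec_tup ?eqxx; last by case/andP: Pn.
  rewrite big1 ?addr0; first by rewrite /GRing.scale /= mulr1.
  move=> i /andP[/andP[vi _] ni]; rewrite ffunE bvec_tup // eq_sym (negbTE ni).
  by rewrite /GRing.scale /= mulr0.
rewrite big1 // => i /andP[vi xi']; rewrite ffunE bvec_tup //.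
case: eqP => [ni|_]; last by rewrite /GRing.scale /= mulr0.
by rewrite ni vi xi' in Pn.
Qed.

Lemma le_dec_m (p : 'I_N) : [forall i, x i <= dec m p i]%N -> [forall i, x i <= m i]%N.
Proof.
move=> /forallP H; apply/forallP => i; have := H i; rewrite dec_val.
by case: eqP => _; lia.
Qed.

Lemma nsum_le (u v : Idx) : [forall i, u i <= v i]%N -> (nsum u <= nsum v)%N.
Proof. by move=> /forallP H; apply: leq_sum => i _; apply: H. Qed.

Lemma Zkk0 (p : 'I_N) : kk p = 0%N -> Z p.+1 - Z p = 0.
Proof. by move=> k0; have [-> ->] := Z_split p; rewrite k0 !poch0 subrr. Qed.


Lemma nsum_valid (u : Idx) : valid u -> (nsum u <= \sum_(p < N) ell p)%N.
Proof. by move=> /forallP H; apply: leq_sum => i _; apply: H. Qed.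

Lemma key : valid m -> valid x ->
  (forall k : nat, (1 <= k <= (2 * \sum_(p < N) ell p).-1)%N -> omega != - k%:R) ->
  Vx omega a x m * theta theta0 h omega (tabs (tup m))
  + \sum_(p < N) (if (0 < m p)%N then Vx omega a x (dec m p) * xi ell h omega a (tup m) p else 0)
  = theta theta0 h omega (tabs (tup x)) * Vx omega a x m.
Proof.
move=> vm vx Hom.
rewrite Vx_coord vm /=; case: (boolP [forall p, x p <= m p]%N) => xm; last first.
  rewrite mul0r mulr0 add0r big1 // => p _; case: ifP => // mp.
  rewrite Vx_coord valid_dec //=; case: ifP => [/le_dec_m|]; first by rewrite (negbTE xm).
  by rewrite mul0r.
have xmP := xm; move/forallP: xmP => xmP.
have -> : \sum_(p < N) (if (0 < m p)%N then Vx omega a x (dec m p) * xi ell h omega a (tup m) p else 0)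
   = \sum_(p < N) (if (x p < m p)%N then Ccoef omega a (dec m p) x * xi ell h omega a (tup m) p else 0).
  apply: eq_bigr => p _; rewrite Vx_coord valid_dec //=.
  case: (ltnP 0 (m p)) => mp; first by rewrite le_dec //; case: ifP => //; rewrite mul0r.
  by have := xmP p; case: ifP => //; lia.
have Hxm := nsum_le xm.
have HmL := nsum_valid vm.
case Ed: (nsum m - nsum x)%N => [|d'].
  rewrite big1 => [|p _]; last first.
    case: ifP => // xp; have := nsum_dec (m := m) (p := p) ltac:(lia).
    have := nsum_le (u := x) (v := dec m p) ltac:(by rewrite le_dec //; lia).
    lia.
  rewrite /theta !tabsE; have -> : nsum m = nsum x by lia.
  by rewrite addr0 mulrC.
have -> : \sum_(p < N) (if (x p < m p)%N then Ccoef omega a (dec m p) x * xi ell h omega a (tup m) p else 0)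
   = h * ((-1) ^+ d' / poch ((2 * nsum x)%:R + omega + 1) d') *
     \sum_(p < N) ((ss p.+1 - ss p) * Z p.+1 + ss p * (Z p.+1 - Z p)).
  rewrite mulr_sumr; apply: eq_bigr => p _.
  rewrite -Ediff //; case: ifP => xp.
    rewrite xi_m; last by lia.
    have -> : Ccoef omega a (dec m p) x * (h * (G p + (kk p)%:R + ss p) * (m p)%:R)
      = h * (G p + (kk p)%:R + ss p) * (Ccoef omega a (dec m p) x * (m p)%:R) by ring.
    rewrite Ccoef_dec //.
    have -> : (nsum (dec m p) - nsum x)%N = d'.
      have := nsum_dec (m := m) (p := p) ltac:(lia); lia.
    ring.
  by rewrite Zkk0 ?mulr0 // /kk; have := xmP p; lia.
rewrite telescope; last by rewrite /ss !Sm0 subrr.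
rewrite /ss !SmN -natrB // Ed Ccoef_m Ed /theta !tabsE.
have HM : (nsum m)%:R = (nsum x)%:R + d'%:R + 1 :> C.
  have -> : nsum m = (nsum x + d').+1 by lia.
  by rewrite -natr1 natrD.
set c := (2 * nsum x)%:R + omega + 1 + d'%:R.
have cE : c = omega + (nsum x + nsum m)%:R.
  rewrite /c natrD HM natrM; ring.
have c0 : c != 0.
  rewrite cE; apply/negP => /eqP /(congr1 (fun z => z - (nsum x + nsum m)%:R)).
  rewrite addrK sub0r => E; move: (Hom (nsum x + nsum m)%N); rewrite E eqxx.
  by move=> /(_ ltac:(apply/andP; split; lia)).
rewrite pochS -/c invfM exprS.
move: (poch _ d')^-1 => Pi; move: ((-1) ^+ d') => sg.
rewrite HM; rewrite cE in c0 *.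
rewrite natrD HM -natr1 in c0 *. field.
exact: c0.
Qed.

End Main.


Lemma xi_ext (C : numClosedFieldType) N (ell : 'I_N -> nat) h omega (a : 'I_N -> C)
  (f g : 'I_N -> int) p : (forall i, f i = g i) -> xi ell h omega a f p = xi ell h omega a g p.
Proof.
move=> fg; have E1 k : psum f 1 k = psum g 1 k by apply: eq_bigr => i _; apply: fg.
by rewrite /xi !E1 fg.
Qed.

Theorem mainTheorem2 (C : numClosedFieldType) (N : nat) (ell : 'I_N -> nat)
  (theta0 h omega : C) (a : 'I_N -> C) (hs omegas : C) :
  (0 < N)%N ->
  h != 0 -> hs != 0 ->
  (forall k : nat, (1 <= k <= (2 * \sum_(p < N) ell p).-1)%N ->
     omega != - k%:R /\ omegas != - k%:R) ->
  (forall (i : 'I_N) (k : nat), (1 <= k <= ell i)%N ->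
     [/\ a i != - k%:R,
         a i + omega - omegas != - k%:R,
         a i - (\sum_(p < N) ell p)%:R - omegas != - k%:R &
         a i + (\sum_(p < N) ell p)%:R + omega != - k%:R]) ->
  (forall (i j : 'I_N) (ei ej : bool),
     gen_pos (Sset omega omegas ei (ell i) (a i))
             (Sset omega omegas ej (ell j) (a j))) ->
  forall x : {ffun 'I_N -> 'I_(bnd ell)}, valid x ->
    Aop theta0 h omega a (Vx omega a x)
    = theta theta0 h omega (tabs (tup x)) *: Vx omega a x.
Proof.
move=> N0 hn0 hs0 Hom Ha Hgp x vx.
apply/ffunP => m; rewrite ffunE /Aop sum_ffunE.
rewrite [in RHS]/GRing.scale /=.
case vm : (valid m); last first.
  have A0 n : Abasis ell theta0 h omega a (tup n) m = 0.
    rewrite /Abasis !ffunE vm /= sum_ffunE big1 => [|p _].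
      by rewrite /GRing.scale /= mulr0 addr0.
    by rewrite !ffunE vm /GRing.scale /= mulr0.
  rewrite Vx_coord vm /= mulr0 big1 // => n vn.
  by rewrite ffunE A0 /GRing.scale /= mulr0.
rewrite -(@key C N ell theta0 h omega a x m) //; last first.
  by move=> k /Hom [].
rewrite (eq_bigr (fun n => Vx omega a x n * theta theta0 h omega (tabs (tup n)) * (m == n)%:R
   + \sum_(p < N) Vx omega a x n * xi ell h omega a (addT (tup n) (unitT p)) p
        * bvec C ell (addT (tup n) (unitT p)) m)); last first.
  move=> n vn; set V := Vx omega a x n; rewrite ffunE /Abasis !ffunE vm tupE /= sum_ffunE.
  rewrite /GRing.scale /= mulrDr mulr_sumr mulrA; congr (_ + _).
    by case: eqP.
  by apply: eq_bigr => p _; rewrite ffunE /GRing.scale /= mulrA.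
rewrite big_split /=; congr (_ + _).
  rewrite (bigD1 m) //= eqxx mulr1 big1 ?addr0 // => n /andP[_ nm].
  by rewrite eq_sym (negbTE nm) mulr0.
rewrite exchange_big /=; apply: eq_bigr => p _.
case: (ltnP 0 (m p)) => mp.
  rewrite (bigD1 (dec m p)) ?valid_dec //= /bvec ffunE vm cond_dec // eqxx mulr1.
  rewrite big1 ?addr0 => [|n /andP[_ nd]]; last first.
    by rewrite ffunE vm cond_dec // (negbTE nd) mulr0.
  congr (_ * _); apply: xi_ext => i.
  rewrite /addT /tup /unitT dec_val -PoszD; congr Posz.
  case: eqP => [->|_] /=; last by rewrite addn0.
  by rewrite addn1 prednK.
have mp0 : (m p : nat) = 0%N by lia.
rewrite big1 // => n _; by rewrite /bvec ffunE vm /= cond_dec0 // mulr0.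
Qed.
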